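(* Let $q$ be a self-join-free Boolean conjunctive query, let $q_0\subseteq q$, and let $\mathbf{db}$ be a database. If $\mathbf{o}$ is a garbage set for $q_0$ in $\mathbf{db}$ and $\mathbf{p}$ is a garbage set for $q_0$ in $\mathbf{db}\setminus\mathbf{o}$, then $\mathbf{o}\cup\mathbf{p}$ is a garbage set for $q_0$ in $\mathbf{db}$.
   Context: Every relation name has a signature $[n,k]$ ($1\le k\le n$; primary-key positions $1,\dots,k$) and a mode in $\{\mathsf{c},\mathsf{i}\}$. Facts are variable-free atoms; facts are key-equal if same relation name and same primary-key values. A database is a finite set of facts with no two distinct key-equal facts of mode $\mathsf{c}$, all of whose relation names occur in $q$. The block of a fact $A$ in $\mathbf{db}$ is the set of facts of $\mathbf{db}$ key-equal to $A$. A repair of a set of facts is a maximal subset without two distinct key-equal facts. A self-join-free Boolean conjunctive query is a finite set of atoms with distinct relation names; for a fact $A$, $\mathrm{atom}(A)$ is the atom of $q$ with the same relation name. A subset $\mathbf{o}\subseteq\mathbf{db}$ is a garbage set for $q_0$ in $\mathbf{db}$ if (1) for every $A\in\mathbf{o}$, $\mathrm{atom}(A)\in q_0$ and the block of $A$ in $\mathbf{db}$ is included in $\mathbf{o}$; and (2) there is a repair $\mathbf{r}$ of $\mathbf{o}$ such that for every valuation $\theta$ of the variables of $q$, if $\theta(q)\subseteq(\mathbf{db}\setminus\mathbf{o})\cup\mathbf{r}$ then $\theta(q_0)\cap\mathbf{r}=\emptyset$. *)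

(* Defs.v *)
From Stdlib Require Import List Arith.
Import ListNotations.
Set Implicit Arguments.

Inductive mode := mode_c | mode_i.

Section CQA.
Variables (Rel Const Var : Type).
(* signature [ar R, kl R]: primary-key positions 1..kl R *)
Variables (ar kl : Rel -> nat) (md : Rel -> mode).

Record dbfact := Fact { frel : Rel; fargs : list Const }.
Record atom := Atom { arel : Rel; aargs : list (Var + Const) }.

Definition key_equal (A B : dbfact) : Prop :=
  frel A = frel B /\ firstn (kl (frel A)) (fargs A) = firstn (kl (frel B)) (fargs B).

Definition finite_set (S : dbfact -> Prop) : Prop :=
  exists l : list dbfact, forall A, S A -> In A l.

Definition sjf_query (q : list atom) : Prop :=
  NoDup (map arel q) /\ forall a, In a q -> length (aargs a) = ar (arel a).

Definition is_database (q : list atom) (db : dbfact -> Prop) : Prop :=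
  finite_set db /\
  (forall A, db A -> length (fargs A) = ar (frel A)) /\
  (forall A B, db A -> db B -> md (frel A) = mode_c -> key_equal A B -> A = B) /\
  (forall A, db A -> exists a, In a q /\ arel a = frel A).

Definition block (db : dbfact -> Prop) (A : dbfact) : dbfact -> Prop :=
  fun B => db B /\ key_equal B A.

Definition consistent (S : dbfact -> Prop) : Prop :=
  forall A B, S A -> S B -> key_equal A B -> A = B.

Definition is_repair (S r : dbfact -> Prop) : Prop :=
  (forall A, r A -> S A) /\ consistent r /\
  (forall r' : dbfact -> Prop, (forall A, r A -> r' A) -> (forall A, r' A -> S A) ->
     consistent r' -> forall A, r' A -> r A).

Definition inst (theta : Var -> Const) (a : atom) : dbfact :=
  Fact (arel a) (map (fun t => match t with inl x => theta x | inr c => c end) (aargs a)).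

(* atom(A) \in q0, where atom(A) is the atom of q with the relation name of A *)
Definition atom_in (q q0 : list atom) (A : dbfact) : Prop :=
  exists a, In a q /\ arel a = frel A /\ In a q0.

Definition garbage_set (q q0 : list atom) (db o : dbfact -> Prop) : Prop :=
  (forall A, o A -> db A) /\
  (forall A, o A -> atom_in q q0 A /\ (forall B, block db A B -> o B)) /\
  exists r, is_repair o r /\
    forall theta : Var -> Const,
      (forall a, In a q -> (db (inst theta a) /\ ~ o (inst theta a)) \/ r (inst theta a)) ->
      forall a, In a q0 -> ~ r (inst theta a).

End CQA.

(* Main.v *)
Require Import Defs.
From Stdlib Require Import List Arith.

Lemma nodup_arel (Rel Const Var : Type) (q : list (atom Rel Const Var)) :
  NoDup (map (@arel Rel Const Var) q) ->
  forall a a', In a q -> In a' q -> arel a = arel a' -> a = a'.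
Proof.
  induction q as [|x q IH]; simpl; intros Hn a a' Ha Ha' He; [contradiction|].
  inversion Hn as [|? ? Hx Hn']; subst.
  destruct Ha as [Ha|Ha]; destruct Ha' as [Ha'|Ha']; subst; auto.
  - exfalso; apply Hx; rewrite He; apply in_map; auto.
  - exfalso; apply Hx; rewrite <- He; apply in_map; auto.
Qed.

Theorem lemma32 (Rel Const Var : Type) (ar kl : Rel -> nat) (md : Rel -> mode)
  (q q0 : list (atom Rel Const Var)) (db o p : dbfact Rel Const -> Prop) :
  (forall R, 1 <= kl R <= ar R) ->
  sjf_query ar q ->
  incl q0 q ->
  is_database ar kl md q db ->
  garbage_set kl q q0 db o ->
  garbage_set kl q q0 (fun A => db A /\ ~ o A) p ->
  garbage_set kl q q0 db (fun A => o A \/ p A).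
Proof.
  intros _ [Hnd _] Hincl _ [Ho1 [Ho2 [ro [[Hro1 [Hro2 Hro3]] Hro4]]]]
         [Hp1 [Hp2 [rp [[Hrp1 [Hrp2 Hrp3]] Hrp4]]]].
  assert (Hks : forall A B : dbfact Rel Const, key_equal kl A B -> key_equal kl B A).
  { intros A B [H1 H2]; split; auto; rewrite <- H1; auto. }
  assert (Hsep : forall A B : dbfact Rel Const, o A -> p B -> key_equal kl B A -> False).
  { intros A B HA HB Hk. destruct (Hp1 B HB) as [HdB HnB]. apply HnB.
    apply (proj2 (Ho2 A HA)). split; auto. }
  split; [|split].
  - intros A [HA|HA]; [apply Ho1|apply Hp1]; auto.
  - intros A [HA|HA].
    + split; [apply Ho2; auto|]. intros B HB. left. apply (proj2 (Ho2 A HA)); auto.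
    + split; [apply Hp2; auto|]. intros B [HdB Hk]. right.
      apply (proj2 (Hp2 A HA)). split; auto. split; auto.
      intro HoB. apply (Hsep B A HoB HA). apply Hks; auto.
  - exists (fun A => ro A \/ rp A). split; [split; [|split]|].
    + intros A [H|H]; [left; auto|right; auto].
    + unfold consistent; intros A B [HA|HA] [HB|HB] Hk; auto.
      * exfalso. apply (Hsep A B); auto.
      * exfalso. apply (Hsep B A); auto.
    + intros r' Hsub Hr'S Hcons A HA.
      destruct (Hr'S A HA) as [HoA|HpA].
      * left. apply (Hro3 (fun B => r' B /\ o B)).
        -- intros B HB; split; auto.
        -- intros B HB; apply HB.
        -- intros B C HB HC; apply Hcons; [apply HB|apply HC].
        -- split; auto.
      * right. apply (Hrp3 (fun B => r' B /\ p B)).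
        -- intros B HB; split; auto.
        -- intros B HB; apply HB.
        -- intros B C HB HC; apply Hcons; [apply HB|apply HC].
        -- split; auto.
    + intros theta Hth.
      assert (Hno : forall a, In a q0 -> ~ ro (inst theta a)).
      { apply Hro4. intros a Ha. destruct (Hth a Ha) as [[Hd Hn]|[Hr|Hr]].
        - left; split; auto.
        - right; auto.
        - left. destruct (Hp1 _ (Hrp1 _ Hr)); auto. }
      assert (Hno' : forall a, In a q -> ~ ro (inst theta a)).
      { intros a Ha Hr. destruct (Ho2 _ (Hro1 _ Hr)) as [[a' [Ha'q [Hae Ha'0]]] _].
        simpl in Hae. assert (a' = a) by (apply (nodup_arel _ _ _ q Hnd); auto).
        subst. apply (Hno a); auto. }
      assert (Hnp : forall a, In a q0 -> ~ rp (inst theta a)).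
      { apply Hrp4. intros a Ha. destruct (Hth a Ha) as [[Hd Hn]|[Hr|Hr]].
        - left; split; auto.
        - exfalso; apply (Hno' a); auto.
        - right; auto. }
      intros a Ha [H|H]; [apply (Hno a)|apply (Hnp a)]; auto.
Qed.
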